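(* For every ideal $\mathcal I$ on $\omega$ and every cardinal $\kappa$, each of the classes $(\mathcal I\text{-p},\mathcal I\text{-}\sigma\text{-u})$, $(\mathcal I\text{-p},\mathcal I\text{-qn})$ and $(\mathcal I\text{-qn},\mathcal I\text{-}\sigma\text{-u})$ contains a space of cardinality $\kappa$.
   Context: An ideal on $\omega$ is a family $\mathcal I\subseteq\mathcal P(\omega)$ closed under finite unions and subsets, containing all finite sets, with $\omega\notin\mathcal I$. A real sequence $(a_n)$ is $\mathcal I$-convergent to $0$ if $\{n:|a_n|\ge\varepsilon\}\in\mathcal I$ for all $\varepsilon>0$. For a sequence $(f_n)$ of real functions on a set $X$: $\mathcal I$-p means $(f_n(x))$ is $\mathcal I$-convergent to $0$ for each $x$; $\mathcal I$-u means $\{n:\exists x\in X\,(|f_n(x)|\ge\varepsilon)\}\in\mathcal I$ for each $\varepsilon>0$; $\mathcal I$-$\sigma$-u means $X=\bigcup_{k\in\omega}X_k$ with $(f_n\restriction X_k)$ $\mathcal I$-u convergent to $0$ for each $k$; $\mathcal I$-qn means there is a sequence $(\varepsilon_n)$ of positive reals $\mathcal I$-convergent to $0$ with $\{n:|f_n(x)|\ge\varepsilon_n\}\in\mathcal I$ for each $x$. $\mathcal C(X)$ = continuous real functions on $X$. Normal space = Hausdorff space in which disjoint closed sets have disjoint open neighbourhoods. $(\alpha,\beta)$ is the class of normal spaces $X$ such that for all sequences $(f_n)$ in $\mathcal C(X)$, $f_n\to0$ in sense $\alpha$ iff in sense $\beta$. *)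

(* Defs.v *)
From HB Require Import structures.
From mathcomp Require Import all_boot all_order all_algebra.
From mathcomp Require Import all_classical all_reals all_analysis.
From mathcomp Require Import Rstruct Rstruct_topology.
From Stdlib Require Import Rdefinitions.
Set Implicit Arguments. Unset Strict Implicit. Unset Printing Implicit Defensive.
Import Order.TTheory GRing.Theory Num.Theory.
Local Open Scope classical_set_scope.
Local Open Scope ring_scope.

Notation Real := Rdefinitions.R.

Definition is_ideal (I : set (set nat)) : Prop :=
  [/\ (forall A B, I A -> I B -> I (A `|` B)),
      (forall A B, B `<=` A -> I A -> I B),
      (forall A, finite_set A -> I A)
    & ~ I setT].

Definition Iconv0 (I : set (set nat)) (a : nat -> Real) : Prop :=
  forall e : Real, 0 < e -> I [set n | e <= `|a n|].

Definition I_p (I : set (set nat)) (X : Type) (f : nat -> X -> Real) : Prop :=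
  forall x, Iconv0 I (fun n => f n x).

Definition I_u_on (I : set (set nat)) (X : Type) (A : set X)
  (f : nat -> X -> Real) : Prop :=
  forall e : Real, 0 < e -> I [set n | exists2 x, A x & e <= `|f n x|].

Definition I_sigma_u (I : set (set nat)) (X : Type) (f : nat -> X -> Real) : Prop :=
  exists Xk : nat -> set X,
    \bigcup_k Xk k = setT /\ forall k, I_u_on I (Xk k) f.

Definition I_qn (I : set (set nat)) (X : Type) (f : nat -> X -> Real) : Prop :=
  exists eps : nat -> Real,
    [/\ forall n, 0 < eps n, Iconv0 I eps &
        forall x, I [set n | eps n <= `|f n x|]].

Definition normal_T2 (X : topologicalType) : Prop :=
  hausdorff_space X /\
  forall A B : set X, closed A -> closed B -> A `&` B = set0 ->
    exists U V : set X, [/\ open U, open V, A `<=` U, B `<=` V & U `&` V = set0].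

Definition in_class
  (alpha beta : forall X : Type, (nat -> X -> Real) -> Prop)
  (X : topologicalType) : Prop :=
  normal_T2 X /\
  forall f : nat -> X -> Real, (forall n, continuous (f n)) ->
    (alpha X f <-> beta X f).

Definition same_card (X K : Type) : Prop := exists g : X -> K, bijective g.

(* Main.v *)
Require Import Defs.
From mathcomp Require Import all_boot all_order all_algebra.
From mathcomp Require Import all_classical all_reals all_analysis.
From mathcomp Require Import Rstruct Rstruct_topology.
From HB Require Import structures.
From mathcomp Require Import lra.
Require Import Defs.
Set Implicit Arguments. Unset Strict Implicit. Unset Printing Implicit Defensive.
Import Order.TTheory GRing.Theory Num.Theory.
Local Open Scope classical_set_scope.
Local Open Scope ring_scope.



Lemma countU T (A B : set T) : countable A -> countable B -> countable (A `|` B).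
Proof.
move=> cA cB.
have -> : A `|` B = \bigcup_(i in [set: bool]) (if i then A else B).
  apply/seteqP; split=> x.
    by case=> h; [exists true | exists false].
  by case=> -[] _ h; [left|right].
apply: bigcup_countable; first exact: countableP.
by move=> [] _.
Qed.

Lemma countS T (A B : set T) : A `<=` B -> countable B -> countable A.
Proof. by move=> AB; apply: sub_countable; apply: subset_card_le. Qed.

Definition LK (K : Type) (p : K) : Type := K.
Section Top.
Variables (K : Type) (p : K).
HB.instance Definition _ := gen_eqMixin (LK p).
HB.instance Definition _ := gen_choiceMixin (LK p).
Definition lop : set_system (LK p) := fun U => U p -> countable (~` U).
Lemma lopT : lop setT.
Proof. by move=> _; rewrite setCT; exact: countable0. Qed.
Lemma lopI : setI_closed lop.
Proof.
move=> A B hA hB [Ap Bp]; rewrite setCI; exact: countU (hA Ap) (hB Bp).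
Qed.
Lemma lopU (I : Type) (f : I -> set (LK p)) : (forall i, lop (f i)) ->
    lop (\bigcup_i f i).
Proof.
move=> h [i _ fip]; apply: countS (h i fip) => x nx fx; apply: nx; by exists i.
Qed.
HB.instance Definition _ := isOpenTopological.Build (LK p) lopT lopI lopU.
Lemma openLK (U : set (LK p)) : open U <-> lop U.
Proof.
split.
  move=> oU Up.
  have : nbhs (p : LK p) U by rewrite nbhsE; exists U.
  move=> [B [oB Bp BU]]; apply: countS (oB Bp) => x nx Bx; exact: nx (BU _ Bx).
move=> hU; rewrite openE => x Ux; exists U; split => //.
Qed.
End Top.



Section Norm.
Variables (K : Type) (p : K).
Lemma open_not_p (U : set (LK p)) : ~ U p -> open U.
Proof. by move=> h; apply/openLK => /h. Qed.
Lemma open_Ccount (U : set (LK p)) : countable (~` U) -> open U.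
Proof. by move=> h; apply/openLK. Qed.

Lemma LK_normal : normal_T2 (LK p).
Proof.
split.
  rewrite open_hausdorff => x y xy.
  have sep : forall a b : LK p, a != b -> ~ a = p ->
    exists2 AB, (a \in AB.1 /\ b \in AB.2) &
      [/\ open AB.1, open AB.2 & AB.1 `&` AB.2 == set0].
    move=> a b ab ap; exists ([set a], ~` [set a]); split => /=.
    - by rewrite inE.
    - by rewrite inE => ba; move/eqP: ab; apply; rewrite ba.
    - by apply: open_not_p => /= pa; apply: ap; rewrite pa.
    - by apply: open_Ccount; rewrite setCK; exact: countable1.
    - by rewrite setICr.
  case: (pselect (x = p)) => xp; last exact: sep.
  have yx : y != x by rewrite eq_sym.
  have yp : ~ y = p by move=> h; move: xy; rewrite xp h eqxx.
  have [[A B] [xA yB] [oA oB AB]] := sep y x yx yp.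
  by exists (B, A) => //=; split => //; rewrite setIC.
move=> A B cA cB AB.
have oCA : open (~` A) by rewrite openC.
have oCB : open (~` B) by rewrite openC.
case: (pselect (A p)) => Ap.
  have nBp : ~ B p by move=> Bp; have : (A `&` B) p by []; rewrite AB.
  exists (~` B), B; split.
  - exact: oCB.
  - exact: open_not_p.
  - by move=> x Ax Bx; have : (A `&` B) x by []; rewrite AB.
  - by [].
  - by rewrite setICl.
exists A, (~` A); split.
- exact: open_not_p.
- exact: oCA.
- by [].
- by move=> x Bx Ax; have : (A `&` B) x by []; rewrite AB.
- by rewrite setICr.
Qed.
End Norm.



Definition w (k : nat) : Real := (k.+1%:R)^-1.

Lemma w_gt0 k : 0 < w k.
Proof. by rewrite /w invr_gt0 ltr0n. Qed.

Lemma w_le k N : (k <= N)%N -> w N <= w k.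
Proof.
move=> kN; rewrite /w lef_pV2 ?posrE ?ltr0n // ler_nat; by [].
Qed.

Lemma archi (e : Real) : 0 < e -> exists N : nat, w N < e.
Proof.
move=> e0; have [k hk] := ltr_add_invr e0; exists k; move: hk; by rewrite add0r.
Qed.

Lemma w_small_fin (e : Real) : 0 < e -> finite_set [set n | e <= w n].
Proof.
move=> e0; have [N hN] := archi e0.
apply: (sub_finite_set _ (finite_II N)) => n /= hn.
rewrite ltnNge; apply/negP => Nn.
have := w_le Nn; lra.
Qed.

Section Ideal.
Variable I : set (set nat).
Hypothesis hI : is_ideal I.

Lemma I_sub A B : B `<=` A -> I A -> I B.
Proof. by case: hI => _ h _ _; exact: h. Qed.
Lemma I_U A B : I A -> I B -> I (A `|` B).
Proof. by case: hI => h _ _ _; exact: h. Qed.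
Lemma I_fin A : finite_set A -> I A.
Proof. by case: hI => _ _ h _; exact: h. Qed.

Lemma I_bigU (A : nat -> set nat) N : (forall k, I (A k)) ->
  I [set n | exists2 k, (k < N)%N & A k n].
Proof.
move=> hA; elim: N => [|N IH].
  apply: (I_sub (A := set0)); first by move=> n [k]; rewrite ltn0.
  exact/I_fin/finite_set0.
apply: (I_sub (A := [set n | exists2 k, (k < N)%N & A k n] `|` A N)); last exact: I_U.
move=> n [k]; rewrite ltnS leq_eqVlt => /orP[/eqP ->|kN] h; [right|left] => //.
by exists k.
Qed.

Lemma Iconv0_w : Iconv0 I w.
Proof.
move=> e e0; apply: I_fin; apply: (sub_finite_set _ (w_small_fin e0)) => n /=.
by rewrite ger0_norm // ltW // w_gt0.
Qed.

Lemma sigma_u_p X (f : nat -> X -> Real) : I_sigma_u I f -> I_p I f.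
Proof.
move=> [Xk [cov hu]] x e e0.
have : (\bigcup_k Xk k) x by rewrite cov.
move=> [k _ xk]; apply: I_sub (hu k e e0) => n /= h; by exists x.
Qed.

Lemma qn_p X (f : nat -> X -> Real) : I_qn I f -> I_p I f.
Proof.
move=> [eps [eps0 epsc hx]] x e e0.
apply: (I_sub (A := [set n | eps n <= `|f n x|] `|` [set n | e <= `|eps n|])).
  move=> n /= h; case: (lerP (eps n) (`|f n x|)) => hn; [left|right] => //.
  rewrite ger0_norm ?ltW //; lra.
exact: I_U (hx x) (epsc e e0).
Qed.
End Ideal.



Section Prof.
Variable I : set (set nat).
Hypothesis hI : is_ideal I.
Variables (X : Type) (f : nat -> X -> Real) (Xk : nat -> set X).
Hypothesis cov : forall x, exists k, Xk k x.
Hypothesis prof : forall k x y, Xk k x -> Xk k y -> forall n, f n x = f n y.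

Lemma prof_sigma_u : I_p I f -> I_sigma_u I f.
Proof.
move=> hp; exists Xk; split.
  apply/seteqP; split => // x _; have [k h] := cov x; by exists k.
move=> k e e0; case: (pselect (exists x, Xk k x)) => [[x0 h0]|hn].
  apply: I_sub (hp x0 e e0) => // n /= [x xk hx]; by rewrite -(prof xk h0).
apply: (I_sub hI (A := set0)); first by move=> n /= [x xk]; case: hn; exists x.
exact/(I_fin hI)/finite_set0.
Qed.

Definition aa (k n : nat) : Real :=
  match pselect (exists x, Xk k x) with
  | left h => `|f n (projT1 (cid h))|
  | right _ => 0 end.

Lemma aa_ge0 k n : 0 <= aa k n.
Proof. by rewrite /aa; case: pselect. Qed.

Lemma aa_eq k x n : Xk k x -> `|f n x| = aa k n.
Proof.
move=> xk; rewrite /aa; case: pselect => [h|hn]; last by case: hn; exists x.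
by case: (cid h) => y yk /=; rewrite (prof xk yk).
Qed.

Lemma aa_conv : I_p I f -> forall k, Iconv0 I (aa k).
Proof.
move=> hp k e e0; case: (pselect (exists x, Xk k x)) => [[x0 h0]|hn].
  apply: I_sub (hp x0 e e0) => // n /=; by rewrite -(aa_eq n h0) normr_id.
apply: (I_sub hI (A := set0)); last exact/(I_fin hI)/finite_set0.
move=> n /=; rewrite /aa; case: pselect => [h|_]; first by case: hn.
rewrite normr0; lra.
Qed.

Definition FF (k n : nat) : Real := Num.min (2 * aa k n) (w k).

Lemma FF_ge0 k n : 0 <= FF k n.
Proof.
rewrite /FF le_min; apply/andP; split; last exact/ltW/w_gt0.
by have := aa_ge0 k n; lra.
Qed.

Fixpoint MM (n m : nat) : Real :=
  match m with 0 => FF 0 n | m'.+1 => Num.max (MM n m') (FF m'.+1 n) end.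

Lemma MM_ge k n m : (k <= m)%N -> FF k n <= MM n m.
Proof.
elim: m => [|m IH]; first by rewrite leqn0 => /eqP ->.
rewrite leq_eqVlt => /orP[/eqP ->|]; first by rewrite /= le_max lexx orbT.
rewrite ltnS => /IH h; by rewrite /= le_max h.
Qed.

Lemma MM_ex n m : exists2 k, (k <= m)%N & MM n m = FF k n.
Proof.
elim: m => [|m [k km IH]]; first by exists 0%N.
rewrite /=; case: (leP (MM n m) (FF m.+1 n)) => h.
  by exists m.+1.
by exists k; [exact: leqW | exact: IH].
Qed.

Definition eps (n : nat) : Real := MM n n + w n.

Lemma prof_qn : I_p I f -> I_qn I f.
Proof.
move=> hp; have ac := aa_conv hp.
exists eps; split.
- move=> n; rewrite /eps; have [k _ ->] := MM_ex n n.
  have := w_gt0 n; have := FF_ge0 k n; lra.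
- move=> e e0; have e20 : 0 < e / 2 by lra.
  have [N hN] := archi e20.
  apply: (I_sub hI (A := [set n | e / 2 <= w n] `|`
     [set n | exists2 k, (k < N)%N & (fun k n => e / 4 <= `|aa k n|) k n])).
    move=> n /=; rewrite /eps.
    have w0 := w_gt0 n; have [k kn ->] := MM_ex n n.
    have a0 := aa_ge0 k n.
    have F0 := FF_ge0 k n.
    rewrite ger0_norm; last lra.
    move=> h; case: (lerP (e / 2) (w n)) => h2; [left|right] => //.
    have h3 : e / 2 <= FF k n by lra.
    move: h3; rewrite /FF le_min => /andP[h4 h5].
    exists k; last by rewrite ger0_norm //; lra.
    rewrite ltnNge; apply/negP => Nk; have := w_le Nk; lra.
  apply: (I_U hI); first by apply: (I_fin hI); exact: w_small_fin.
  apply: (I_bigU hI) => k; apply: ac; lra.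
- move=> x; have [k xk] := cov x.
  apply: (I_sub hI (A := [set n | (n < k)%N] `|` [set n | w k <= `|aa k n|])).
    move=> n /=; rewrite (aa_eq n xk) /eps => h.
    case: (ltnP n k) => nk; [by left|right].
    have h1 := MM_ge n nk; have w0 := w_gt0 n; have a0 := aa_ge0 k n.
    rewrite ger0_norm //; case: (lerP (w k) (aa k n)) => // hlt.
    have : aa k n <= FF k n.
      rewrite /FF le_min; apply/andP; split; lra.
    lra.
  apply: (I_U hI); first exact/(I_fin hI)/finite_II.
  exact: (ac k _ (w_gt0 k)).
Qed.
End Prof.



Lemma cont_count (K : Type) (p : K) (g : LK p -> Real) (e : Real) :
  continuous g -> 0 < e -> countable [set y : LK p | ~ (`|g p - g y| < e)].
Proof.
move=> hc e0.
have hb : nbhs (g p) (ball (g p) e) by exact: nbhsx_ballx.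
have := hc p _ hb; rewrite nbhsE => -[B [oB Bp] BA].
move/openLK: oB => /(_ Bp) cB; apply: countS cB => y /= ny By; apply: ny.
by have := BA y By; rewrite /ball /=.
Qed.

Lemma small_eq0 (d : Real) : (forall m, `|d| < w m) -> d = 0.
Proof.
move=> h; apply/eqP; apply: contraT => d0.
have d0' : 0 < `|d| by rewrite normr_gt0.
have [N hN] := archi d0'.
have := h N; lra.
Qed.

Lemma LK_partition (K : Type) (p : K) (f : nat -> LK p -> Real) :
  (forall n, continuous (f n)) ->
  exists Xk : nat -> set (LK p), (forall x, exists k, Xk k x) /\
    (forall k x y, Xk k x -> Xk k y -> forall n, f n x = f n y).
Proof.
move=> hc.
pose C := \bigcup_(n in [set: nat]) \bigcup_(m in [set: nat])
   [set y : LK p | ~ (`|f n p - f n y| < w m)].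
have cC : countable C.
  apply: bigcup_countable; first exact: countableP.
  move=> n _; apply: bigcup_countable; first exact: countableP.
  move=> m _; exact: cont_count (hc n) (w_gt0 m).
have [g ginj] := countable_injP _ cC.
have nC : forall x n, ~ C x -> f n x = f n p.
  move=> x n nx; apply/eqP; rewrite -subr_eq0 -normr_eq0 distrC normr_eq0 subr_eq0; apply/eqP.
  apply/eqP; rewrite -subr_eq0; apply/eqP; apply: small_eq0 => m.
  apply: contrapT => hm; apply: nx; exists n => //; exists m => //.
exists (fun k => if k is k'.+1 then [set x | C x /\ g x = k'] else ~` C); split.
  move=> x; case: (pselect (C x)) => hx; first by exists (g x).+1.
  by exists 0%N.
move=> [|k] x y /=.
  by move=> hx hy n; rewrite (nC _ _ hx) (nC _ _ hy).
move=> [Cx gx] [Cy gy] n; congr (f n _); apply: ginj; rewrite ?inE //.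
by rewrite gx gy.
Qed.



Lemma classes_of (I : set (set nat)) (hI : is_ideal I) (X : topologicalType) :
  normal_T2 X ->
  (forall f : nat -> X -> Real, (forall n, continuous (f n)) ->
    exists Xk : nat -> set X, (forall x, exists k, Xk k x) /\
      (forall k x y, Xk k x -> Xk k y -> forall n, f n x = f n y)) ->
  [/\ in_class (I_p I) (I_sigma_u I) X, in_class (I_p I) (I_qn I) X
    & in_class (I_qn I) (I_sigma_u I) X].
Proof.
move=> nX hX; split; split => // f hc; have [Xk [cov prof]] := hX f hc.
- split; first exact: prof_sigma_u.
  exact: sigma_u_p.
- split; first exact: prof_qn.
  exact: qn_p.
- split.
    by move=> /(qn_p hI); apply: prof_sigma_u.
  by move=> /(sigma_u_p hI); apply: prof_qn.
Qed.

Definition DK (K : Type) : Type := K.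
Section Disc.
Variable K : Type.
HB.instance Definition _ := gen_eqMixin (DK K).
HB.instance Definition _ := gen_choiceMixin (DK K).
Definition dop : set_system (DK K) := fun _ => True.
Lemma dopT : dop setT. Proof. by []. Qed.
Lemma dopI : setI_closed dop. Proof. by []. Qed.
Lemma dopU (J : Type) (f : J -> set (DK K)) : (forall i, dop (f i)) ->
    dop (\bigcup_i f i).
Proof. by []. Qed.
HB.instance Definition _ := isOpenTopological.Build (DK K) dopT dopI dopU.
End Disc.

Theorem corollary6p5 (I : set (set nat)) (hI : is_ideal I) (K : Type) :
  [/\ exists X : topologicalType,
        in_class (I_p I) (I_sigma_u I) X /\ same_card X K,
      exists X : topologicalType,
        in_class (I_p I) (I_qn I) X /\ same_card X K
    & exists X : topologicalType,
        in_class (I_qn I) (I_sigma_u I) X /\ same_card X K].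
Proof.
case: (pselect (exists p : K, True)) => [[p _]|hK].
  have sc : same_card (LK p) K by exists (@id K) => //; exists id.
  have [h1 h2 h3] := classes_of hI (LK_normal p) (@LK_partition K p).
  by split; exists (LK p).
have sc : same_card (DK K) K by exists (@id K) => //; exists id.
have nK : forall x : DK K, False by move=> x; apply: hK; exists x.
have nX : normal_T2 (DK K).
  split; first by move=> x; case: (nK x).
  move=> A B _ _ AB; exists A, B; split => //.
have [h1 h2 h3] := classes_of hI nX (fun f _ =>
   ex_intro _ (fun _ => setT) (conj (fun x => False_ind _ (nK x))
     (fun k x => False_ind _ (nK x)))).
by split; exists (DK K).
Qed.
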